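(* Let $L$ be a normal incline and let $A\in M_n(L)$ be a symmetric matrix. Then the following are equivalent: (1) $A$ is positive semidefinite; (2) $A$ is completely positive; (3) every $2\times 2$ principal submatrix of $A$ has positive determinant greater than or equal to its negative determinant, i.e. $a_{ii}\otimes a_{jj}\ge a_{ij}\otimes a_{ji}$ for all $i,j$; (4) there exist a diagonal matrix $D\in M_n(L)$ and a symmetric matrix $M\in M_n(L)$ all of whose diagonal entries equal $\mathbf{1}$ such that $A=DMD$.
   Context: An incline is a nonempty set $L$ with binary operations $\oplus,\otimes$ such that $(L,\oplus)$ is a semilattice ($\oplus$ associative, commutative, idempotent), $(L,\otimes)$ is a semigroup, $x\otimes(y\oplus z)=(x\otimes y)\oplus(x\otimes z)$ and $x\oplus(x\otimes y)=x$ for all $x,y,z$. The order is $x\le y\iff x\oplus y=y$. $L$ is commutative if $\otimes$ is commutative. An r-ideal is a nonempty $J\subseteq L$ closed under $\oplus$ and under multiplication by arbitrary elements of $L$; a lattice ideal is a nonempty $J\subseteq L$ closed under $\oplus$ and downward closed for $\le$. A commutative incline $L$ is normal if it has an additive identity $\mathbf{0}$ and a multiplicative identity $\mathbf{1}$ and: (LI-property) every singly generated r-ideal of $L$ is a lattice ideal; (unique square root property) for every $x\in L$ there is a unique $c\in L$ with $c\otimes c=x$; (AG-property) $x\otimes y\le (x\otimes x)\oplus(y\otimes y)$ for all $x,y$. Matrices over $L$ are multiplied by $(BC)_{ij}=\bigoplus_k b_{ik}\otimes c_{kj}$ and added entrywise by $\oplus$; $B^T$ is the transpose. A matrix $A\in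 M_n(L)$ is positive semidefinite if $A=BB^T$ for some $n\times k$ matrix $B$ over $L$, and completely positive if moreover $B$ can be chosen with every entry a perfect square (of the form $c\otimes c$). For a $2\times 2$ matrix $\begin{bmatrix}p&q\\ r&s\end{bmatrix}$ the positive determinant is $p\otimes s$ and the negative determinant is $q\otimes r$. A diagonal matrix has all off-diagonal entries $\mathbf{0}$. *)

(* Defs.v *)
From mathcomp Require Import all_boot all_algebra.
Set Implicit Arguments. Unset Strict Implicit. Unset Printing Implicit Defensive.

Record incline := Incline {
  icarrier :> Type;
  iadd : icarrier -> icarrier -> icarrier;
  imul : icarrier -> icarrier -> icarrier;
  iaddA : forall x y z, iadd x (iadd y z) = iadd (iadd x y) z;
  iaddC : forall x y, iadd x y = iadd y x;
  iaddI : forall x, iadd x x = x;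
  imulA : forall x y z, imul x (imul y z) = imul (imul x y) z;
  imulDr : forall x y z, imul x (iadd y z) = iadd (imul x y) (imul x z);
  iabsorb : forall x y, iadd x (imul x y) = x
}.

Section InclineNotions.
Variable L : incline.

Definition ile (x y : L) : Prop := iadd x y = y.

Definition is_square (x : L) : Prop := exists c : L, imul c c = x.

Definition r_ideal (J : L -> Prop) : Prop :=
  (exists x, J x) /\
  (forall x y, J x -> J y -> J (iadd x y)) /\
  (forall x y, J x -> J (imul x y) /\ J (imul y x)).

Definition lattice_ideal (J : L -> Prop) : Prop :=
  (exists x, J x) /\
  (forall x y, J x -> J y -> J (iadd x y)) /\
  (forall x y, J y -> ile x y -> J x).

Definition gen_r_ideal (a : L) : L -> Prop :=
  fun x => forall J, r_ideal J -> J a -> J x.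

Definition LI_property : Prop := forall a : L, lattice_ideal (gen_r_ideal a).

Definition unique_square_root_property : Prop :=
  forall x : L, exists! c : L, imul c c = x.

Definition AG_property : Prop :=
  forall x y : L, ile (imul x y) (iadd (imul x x) (imul y y)).

Definition is_additive_identity (z : L) : Prop := forall x, iadd z x = x /\ iadd x z = x.
Definition is_multiplicative_identity (o : L) : Prop := forall x, imul o x = x /\ imul x o = x.
Definition commutative_incline : Prop := forall x y : L, imul x y = imul y x.

End InclineNotions.

Record normal_incline := NormalIncline {
  ni_incline :> incline;
  izero : ni_incline;
  ione : ni_incline;
  ni_comm : commutative_incline ni_incline;
  ni_zero : is_additive_identity izero;
  ni_one : is_multiplicative_identity ione;
  ni_LI : LI_property ni_incline;
  ni_usqrt : unique_square_root_property ni_incline;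
  ni_AG : AG_property ni_incline
}.

Section Matrices.
Variable L : normal_incline.

Definition imxmul m n p (B : 'M[L]_(m, n)) (C : 'M[L]_(n, p)) : 'M[L]_(m, p) :=
  \matrix_(i < m, j < p) \big[@iadd L / izero L]_(k < n) imul (B i k) (C k j).

Definition isymmetric n (A : 'M[L]_n) : Prop := trmx A = A.

Definition positive_semidefinite n (A : 'M[L]_n) : Prop :=
  exists k (B : 'M[L]_(n, k)), A = imxmul B (trmx B).

Definition completely_positive n (A : 'M[L]_n) : Prop :=
  exists k (B : 'M[L]_(n, k)), A = imxmul B (trmx B) /\ forall i j, is_square (B i j).

Definition idiagonal n (D : 'M[L]_n) : Prop :=
  forall i j : 'I_n, i != j -> D i j = izero L.

Definition pos_det (M : 'M[L]_2) : L := imul (M ord0 ord0) (M ord_max ord_max).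
Definition neg_det (M : 'M[L]_2) : L := imul (M ord0 ord_max) (M ord_max ord0).

Definition principal2 n (A : 'M[L]_n) (i j : 'I_n) : 'M[L]_2 :=
  \matrix_(a < 2, b < 2)
    A (if a == 0 :> nat then i else j) (if b == 0 :> nat then i else j).

End Matrices.

(* Main.v *)
From HB Require Import structures.
Require Import Defs.
From mathcomp Require Import all_boot all_algebra.
From Stdlib Require Import ClassicalEpsilon.
Set Warnings "-notation-overridden,-ambiguous-paths,-redundant-canonical-projection".

Section S.
Variable L : normal_incline.
Local Notation "x ⊕ y" := (@iadd L x y) (at level 50, left associativity).
Local Notation "x ⊗ y" := (@imul L x y) (at level 40, left associativity).
Local Notation "x ≼ y" := (@ile L x y) (at level 70).
Local Notation O := (izero L).
Local Notation I := (ione L).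

Lemma add0l (x : L) : O ⊕ x = x. Proof. exact: (proj1 (ni_zero x)). Qed.
Lemma addr0 (x : L) : x ⊕ O = x. Proof. exact: (proj2 (ni_zero x)). Qed.
HB.instance Definition _ := Monoid.isComLaw.Build L (izero L) (@iadd L) (@iaddA L) (@iaddC L) add0l.

Lemma mulC (x y : L) : x ⊗ y = y ⊗ x. Proof. exact: ni_comm. Qed.
Lemma mulA (x y z : L) : x ⊗ (y ⊗ z) = x ⊗ y ⊗ z. Proof. exact: imulA. Qed.
Lemma mulDr (x y z : L) : x ⊗ (y ⊕ z) = x ⊗ y ⊕ x ⊗ z. Proof. exact: imulDr. Qed.
Lemma mulDl (x y z : L) : (y ⊕ z) ⊗ x = y ⊗ x ⊕ z ⊗ x.
Proof. by rewrite mulC mulDr !(mulC x). Qed.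
Lemma mul1l (x : L) : I ⊗ x = x. Proof. exact: (proj1 (ni_one x)). Qed.
Lemma mul1r (x : L) : x ⊗ I = x. Proof. exact: (proj2 (ni_one x)). Qed.
Lemma mul0l (x : L) : O ⊗ x = O.
Proof. by have := iabsorb O x; rewrite add0l. Qed.
Lemma mul0r (x : L) : x ⊗ O = O. Proof. by rewrite mulC mul0l. Qed.
Lemma mulACA (a b c d : L) : (a ⊗ b) ⊗ (c ⊗ d) = (a ⊗ c) ⊗ (b ⊗ d).
Proof. by rewrite -!mulA (mulA b) (mulC b c) -mulA. Qed.

Lemma le_refl (x : L) : x ≼ x. Proof. exact: iaddI. Qed.
Lemma le_trans (x y z : L) : x ≼ y -> y ≼ z -> x ≼ z.
Proof. rewrite /ile => H1 H2. by rewrite -H2 iaddA H1. Qed.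
Arguments le_trans {x y z}.
Lemma le_anti (x y : L) : x ≼ y -> y ≼ x -> x = y.
Proof. rewrite /ile => H1 H2. by rewrite -H1 iaddC H2. Qed.
Lemma le0 (x : L) : O ≼ x. Proof. exact: add0l. Qed.
Lemma le_add (x y z : L) : x ≼ z -> y ≼ z -> x ⊕ y ≼ z.
Proof. rewrite /ile => H1 H2. by rewrite -iaddA H2 H1. Qed.
Lemma le_addl (x y : L) : x ≼ x ⊕ y.
Proof. by rewrite /ile iaddA iaddI. Qed.
Lemma le_addr (x y : L) : y ≼ x ⊕ y.
Proof. by rewrite iaddC; apply: le_addl. Qed.
Lemma le_mul2l (x y z : L) : x ≼ y -> z ⊗ x ≼ z ⊗ y.
Proof. rewrite /ile => H. by rewrite -mulDr H. Qed.
Lemma le_mul (x y u v : L) : x ≼ y -> u ≼ v -> x ⊗ u ≼ y ⊗ v.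
Proof.
move=> H1 H2; apply: (le_trans (y := x ⊗ v)); first exact: le_mul2l.
by rewrite (mulC x) (mulC y); apply: le_mul2l.
Qed.
Lemma le1 (x : L) : x ≼ I.
Proof. by have := iabsorb I x; rewrite mul1l /ile iaddC. Qed.
Lemma mul_lel (x y : L) : x ⊗ y ≼ x.
Proof. by rewrite /ile iaddC iabsorb. Qed.
Lemma mul_ler (x y : L) : x ⊗ y ≼ y.
Proof. by rewrite mulC; apply: mul_lel. Qed.

Lemma sq_le (x y : L) : x ⊗ x ≼ y ⊗ y -> x ≼ y.
Proof.
move=> H.
have E : (x ⊕ y) ⊗ (x ⊕ y) = y ⊗ y.
  apply: le_anti; last by rewrite mulDl !mulDr; exact: le_trans (le_addr (y ⊗ x) (y ⊗ y)) (le_addr _ _).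
  have AG := ni_AG x y. rewrite H in AG.
  rewrite mulDl !mulDr; apply: le_add; apply: le_add => //; try exact: le_refl.
  by rewrite mulC.
have [c [_ Hc]] := ni_usqrt (y ⊗ y).
by rewrite /ile -(Hc _ E); exact: Hc.
Qed.

Lemma le_div (x y : L) : x ≼ y -> exists m, x = y ⊗ m.
Proof.
move=> H.
have [_ [_ Hd]] := ni_LI y.
have Gy : gen_r_ideal y y by move=> J _ Jy.
have Gx := Hd x y Gy H.
apply: (Gx (fun z => exists m, z = y ⊗ m)).
  split; first by exists y, I; rewrite mul1r.
  split; first by move=> a b [m ->] [m' ->]; exists (m ⊕ m'); rewrite mulDr.
  move=> a b [m ->]; split; first by exists (m ⊗ b); rewrite mulA.
  by exists (m ⊗ b); rewrite mulC mulA.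
by exists I; rewrite mul1r.
Qed.

Lemma sum_le n (F : 'I_n -> L) c : (forall k, F k ≼ c) -> \big[@iadd L/O]_(k < n) F k ≼ c.
Proof. move=> H; elim/big_rec: _ => [|k s _ Hs]; [exact: le0 | exact: le_add]. Qed.

Lemma le_sum n (F : 'I_n -> L) k0 : F k0 ≼ \big[@iadd L/O]_(k < n) F k.
Proof. rewrite (bigD1 k0) //=; exact: le_addl. Qed.

Lemma sum_only n (F : 'I_n -> L) k0 : (forall k, k != k0 -> F k = O) ->
  \big[@iadd L/O]_(k < n) F k = F k0.
Proof. move=> H; rewrite (bigD1 k0) //= big1 ?addr0 // => k /H. Qed.

Lemma mul_suml n (F : 'I_n -> L) y :
  (\big[@iadd L/O]_(k < n) F k) ⊗ y = \big[@iadd L/O]_(k < n) (F k ⊗ y).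
Proof.
apply: (big_morph (fun x => x ⊗ y)); first by move=> a b; rewrite mulDl.
exact: mul0l.
Qed.

Variable n : nat.
Implicit Types A D M : 'M[L]_n.

Lemma DMD_entry D M i j : idiagonal D ->
  imxmul (imxmul D M) D i j = D i i ⊗ M i j ⊗ D j j.
Proof.
move=> HD; rewrite /imxmul !mxE (@sum_only _ _ j); last first.
  by move=> k Hk; rewrite mxE HD ?mul0r.
rewrite mxE (@sum_only _ _ i) //.
by move=> k Hk; rewrite HD ?mul0l // eq_sym.
Qed.

Definition rep A := exists (d : 'I_n -> L) (m : 'I_n -> 'I_n -> L),
  (forall i j, m i j = m j i) /\ (forall i, m i i = I) /\
  (forall i j, A i j = d i ⊗ m i j ⊗ d j).

Definition P3 A := forall i j : 'I_n,
  ile (neg_det (principal2 A i j)) (pos_det (principal2 A i j)).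

Lemma P3E A : P3 A <-> forall i j, A i j ⊗ A j i ≼ A i i ⊗ A j j.
Proof. by rewrite /P3 /neg_det /pos_det; split => H i j; have := H i j; rewrite !mxE. Qed.

Lemma symE A : isymmetric A -> forall i j, A j i = A i j.
Proof. by move=> H i j; rewrite -{1}H mxE. Qed.

Lemma P1_P3 A : positive_semidefinite A -> P3 A.
Proof.
move=> [k [B ->]]; apply/P3E => i j; rewrite /imxmul !mxE.
rewrite mul_suml; apply: sum_le => a; rewrite mulC mul_suml; apply: sum_le => b.
rewrite !mxE.
set p := B i a; set q := B j a; set r := B j b; set s := B i b.
have -> : (r ⊗ s) ⊗ (p ⊗ q) = (p ⊗ r) ⊗ (s ⊗ q).
  by rewrite mulC mulACA (mulC q s).
apply: le_trans (ni_AG _ _) _; apply: le_add.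
- rewrite mulACA; apply: le_mul.
  + by have := @le_sum _ (fun k => B i k ⊗ (trmx B) k i) a; rewrite /= mxE.
  + by have := @le_sum _ (fun k => B j k ⊗ (trmx B) k j) b; rewrite /= mxE.
- rewrite mulACA; apply: le_mul.
  + by have := @le_sum _ (fun k => B i k ⊗ (trmx B) k i) b; rewrite /= mxE.
  + by have := @le_sum _ (fun k => B j k ⊗ (trmx B) k j) a; rewrite /= mxE.
Qed.

Lemma P3_rep A : isymmetric A -> P3 A -> rep A.
Proof.
move=> HS /P3E H.
have sq : forall i, {d : L | d ⊗ d = A i i}.
  move=> i; apply: constructive_indefinite_description.
  by have [c [Hc _]] := ni_usqrt (A i i); exists c.
pose d i := sval (sq i).
have Hd : forall i, d i ⊗ d i = A i i by move=> i; exact: svalP (sq i).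
pose g (x y : L) := epsilon (inhabits O) (fun m => x = y ⊗ m).
pose m i j := if i == j then I else g (A i j) (d i ⊗ d j).
exists d, m; split; last split.
- move=> i j; rewrite /m eq_sym; case: eqP => // _.
  by rewrite (symE _ HS) mulC.
- by move=> i; rewrite /m eqxx.
- move=> i j; rewrite /m; case: eqP => [<-|_]; first by rewrite mul1r Hd.
  have Hle : A i j ≼ d i ⊗ d j.
    apply: sq_le; have := H i j; rewrite (symE _ HS) -Hd -Hd.
    by rewrite mulACA.
  have Hex := le_div _ _ Hle.
  have := epsilon_spec (inhabits O) (fun m => A i j = (d i ⊗ d j) ⊗ m) Hex.
  rewrite -/(g _ _) => {1}->.
  by rewrite -!mulA (mulC (d j)).
Qed.

Lemma rep_P3 A : rep A -> P3 A.
Proof.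
move=> [d [m [ms [m1 Hr]]]]; apply/P3E => i j.
rewrite !Hr !m1 !mul1r.
have Hl : forall i j, d i ⊗ m i j ⊗ d j ≼ d i ⊗ d j.
  move=> a b; rewrite -{2}(mul1r (d a)).
  apply: le_mul; last exact: le_refl.
  by apply: le_mul2l; exact: le1.
apply: le_trans (le_mul _ _ _ _ (Hl i j) (Hl j i)) _.
by rewrite (mulC (d j)) mulACA; exact: le_refl.
Qed.

Lemma rep_P1 A : rep A -> exists k (B : 'M[L]_(n, k)), A = imxmul B (trmx B).
Proof.
move=> [d [m [ms [m1 Hr]]]].
pose v (p : 'I_n * 'I_n) (i : 'I_n) :=
  if i == p.1 then d i else if i == p.2 then m p.1 p.2 ⊗ d i else O.
exists #|{: 'I_n * 'I_n}|, (\matrix_(i < n, c < #|{: 'I_n * 'I_n}|) v (enum_val c) i)%R.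
apply/matrixP => i j; rewrite /imxmul mxE.
apply: le_anti.
- have := @le_sum _ (fun c => (\matrix_(i0 < n, c0 < #|{: 'I_n * 'I_n}|) v (enum_val c0) i0)%R i c ⊗
     trmx (\matrix_(i0 < n, c0 < #|{: 'I_n * 'I_n}|) v (enum_val c0) i0)%R c j) (enum_rank (i, j)).
  rewrite /= !mxE enum_rankK /v /= eqxx.
  case: (eqVneq j i) => [->|Hji]; first by rewrite Hr m1 mul1r.
  by rewrite eqxx Hr mulA.
- apply: sum_le => c; rewrite !mxE; case: (enum_val c) => k l.
  rewrite /v /=.
  case: (eqVneq i k) => [->|Hik].
    case: (eqVneq j k) => [->|Hjk].
      by rewrite Hr m1 mul1r; exact: le_refl.
    case: (eqVneq j l) => [->|Hjl]; last by rewrite mul0r; exact: le0.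
    by rewrite Hr mulA; exact: le_refl.
  case: (eqVneq i l) => [->|Hil]; last by rewrite mul0l; exact: le0.
  case: (eqVneq j k) => [->|Hjk].
    by rewrite Hr (ms k l) (mulC (m l k) (d l)); exact: le_refl.
  case: (eqVneq j l) => [->|Hjl]; last by rewrite mul0r; exact: le0.
  rewrite Hr m1 mul1r; apply: le_mul; exact: mul_ler.
Qed.

Lemma rep_P4 A : rep A <-> exists D M : 'M[L]_n,
       idiagonal D /\ isymmetric M /\ (forall i, M i i = ione L) /\
       A = imxmul (imxmul D M) D.
Proof.
split.
- move=> [d [m [ms [m1 Hr]]]].
  exists (\matrix_(i < n, j < n) if i == j then d i else O)%R, (\matrix_(i < n, j < n) m i j)%R.
  split; first by move=> i j Hij; rewrite mxE (negbTE Hij).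
  split; first by apply/matrixP => i j; rewrite !mxE ms.
  split; first by move=> i; rewrite mxE m1.
  apply/matrixP => i j; rewrite DMD_entry; last by move=> a b Hab; rewrite mxE (negbTE Hab).
  by rewrite !mxE !eqxx Hr.
- move=> [D [M [HD [HM [M1 ->]]]]].
  exists (fun i => D i i), (fun i j => M i j); split; last split => //.
  + by move=> i j; rewrite -{1}HM mxE.
  + by move=> i j; rewrite DMD_entry.
Qed.

End S.

Theorem mainTheorem3 (L : normal_incline) (n : nat) (A : 'M[L]_n) :
  isymmetric A ->
  (positive_semidefinite A <-> completely_positive A) /\
  (completely_positive A <->
     (forall i j : 'I_n, ile (neg_det (principal2 A i j)) (pos_det (principal2 A i j)))) /\
  ((forall i j : 'I_n, ile (neg_det (principal2 A i j)) (pos_det (principal2 A i j))) <->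
     exists D M : 'M[L]_n,
       idiagonal D /\ isymmetric M /\ (forall i, M i i = ione L) /\
       A = imxmul (imxmul D M) D).
Proof.
move=> HS.
have P12 : positive_semidefinite A <-> completely_positive A.
  split; last by move=> [k [B [H _]]]; exists k, B.
  move=> [k [B H]]; exists k, B; split => // i j.
  by have [c [Hc _]] := ni_usqrt (B i j); exists c.
split => //.
split.
- split; first by move/P12; exact: P1_P3.
  by move=> H; apply/P12; apply: rep_P1; exact: P3_rep.
- split; first by move=> H; apply/rep_P4; exact: P3_rep.
  by move/rep_P4; exact: rep_P3.
Qed.
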